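(* For a given $r \in (R_c,R_0)$ the function $s \mapsto \sigma(s;r)$ increases for $s \in (s_0,s_-(r))$, decreases for $s \in (s_-(r),s_+(r))$ and increases to infinity for $s \in (s_+(r),+\infty)$.
   Context: Setting: two-dimensional steady unidirectional water waves with vorticity on finite depth, in non-dimensional units (mass flux $m=1$, gravity $g=1$). The vorticity $\omega=\omega(p)$ is a function of the stream function value $p\in[0,1]$, and $\Omega(p)=\int_0^p \omega(\tau)\,d\tau$. Let $s_0=\sqrt{\max_{p\in[0,1]}2\Omega(p)}$. For $s>s_0$ the laminar (stream) solutions in height-function form are $H(p;s)=\int_0^p \frac{d\tau}{\sqrt{s^2-2\Omega(\tau)}}$, $p\in[0,1]$, with depth $d(s)=H(1;s)$ and Bernoulli constant $R(s)=\tfrac12 s^2-\Omega(1)+d(s)$. As a function of $s$, $R(s)$ decreases from $R_0=\lim_{s\to s_0+}R(s)$ to $R_c$ as $s$ goes from $s_0$ to the critical value $s_c$ (defined by $\int_0^1 (s^2-2\Omega(p))^{-3/2}dp=1$), and increases to infinity for $s>s_c$. Hence for $r\in(R_c,R_0)$ the equation $R(s)=r$ has exactly two solutions $s_-(r)<s_c<s_+(r)$. For $r>R_c$ and $s>s_0$ define $$\sigma(s;r)=\int_0^1\Big(\frac{1}{2H_p^2(p;s)}-H(p;s)-\Omega(p)+\Omega(1)+r\Big)H_p(p;s)\,dp,$$ i.e. the flow force constant of the stream solution $H(p;s)$ with its Bernoulli constant $R(s)$ replaced by $r$. *)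

(* Defs.v *)
From Stdlib Require Import Reals.
From Coquelicot Require Export Coquelicot.
Open Scope R_scope.

Definition Omega (om : R -> R) (p : R) : R := RInt om 0 p.

Definition Hp (om : R -> R) (s p : R) : R := / sqrt (s ^ 2 - 2 * Omega om p).

Definition Hfun (om : R -> R) (s p : R) : R := RInt (fun t => Hp om s t) 0 p.

Definition depth (om : R -> R) (s : R) : R := Hfun om s 1.

Definition Bern (om : R -> R) (s : R) : R := s ^ 2 / 2 - Omega om 1 + depth om s.

Definition flow_force (om : R -> R) (s r : R) : R :=
  RInt (fun p => (/ (2 * (Hp om s p) ^ 2) - Hfun om s p - Omega om p + Omega om 1 + r)
                   * Hp om s p) 0 1.

(* Main.v *)
Require Import Defs.
From Stdlib Require Import Reals Lra.
From Coquelicot Require Import Coquelicot.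
Open Scope R_scope.


Lemma cont_g (Q : R -> R) (s t : R) : (forall t, continuous Q t) ->
  continuous (fun t => s^2 - 2 * Q t) t.
Proof.
  intros Qc.
  apply (continuous_minus (fun _ => s^2) (fun t => 2 * Q t)).
  apply continuous_const.
  apply (continuous_mult (fun _ => 2) Q). apply continuous_const. apply Qc.
Qed.

Lemma cont_kG (Q k H : R -> R) (s s0 : R) :
  (forall t, continuous Q t) -> (forall t, continuous k t) ->
  (forall u t, s0 < u -> 0 < u^2 - 2*Q t) ->
  (forall y, 0 < y -> continuous H y) -> s0 < s ->
  forall t, continuous (fun t => k t * H (s^2 - 2 * Q t)) t.
Proof.
  intros Qc kc Qp Hc hs t.
  apply (continuous_mult k (fun t => H (s^2 - 2 * Q t))). apply kc.
  apply (continuous_comp (fun t => s^2 - 2 * Q t) H). apply cont_g; auto.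
  apply Hc. apply Qp; auto.
Qed.

Lemma cont2_kG (Q k H : R -> R) (s0 s t : R) :
  (forall t, continuous Q t) -> (forall t, continuous k t) ->
  (forall u t, s0 < u -> 0 < u^2 - 2*Q t) ->
  (forall y, 0 < y -> continuous H y) -> s0 < s ->
  continuity_2d_pt (fun u v => k v * (H (u^2 - 2 * Q v) * (2 * u))) s t.
Proof.
  intros Qc kc Qp Hc hs.
  apply continuity_2d_pt_mult.
  apply (continuity_1d_2d_pt_comp k (fun u v => v)).
  apply continuity_pt_filterlim; apply kc. apply continuity_2d_pt_id2.
  apply continuity_2d_pt_mult.
  apply (continuity_1d_2d_pt_comp H (fun u v => u^2 - 2 * Q v)).
  apply continuity_pt_filterlim; apply Hc; apply Qp; auto.
  apply continuity_2d_pt_minus.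
  apply (continuity_2d_pt_ext (fun u v => u * (u * 1))). intros; simpl; ring.
  apply continuity_2d_pt_mult. apply continuity_2d_pt_id1.
  apply continuity_2d_pt_mult. apply continuity_2d_pt_id1. apply continuity_2d_pt_const.
  apply continuity_2d_pt_mult. apply continuity_2d_pt_const.
  apply (continuity_1d_2d_pt_comp Q (fun u v => v)).
  apply continuity_pt_filterlim; apply Qc. apply continuity_2d_pt_id2.
  apply continuity_2d_pt_mult. apply continuity_2d_pt_const. apply continuity_2d_pt_id1.
Qed.

Lemma pt_deriv (Q k G G' : R -> R) (u v : R) :
  0 < u^2 - 2 * Q v -> is_derive G (u^2 - 2 * Q v) (G' (u^2 - 2 * Q v)) ->
  is_derive (fun z => k v * G (z^2 - 2 * Q v)) u (k v * (G' (u^2 - 2 * Q v) * (2 * u))).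
Proof.
  intros hp hG.
  apply is_derive_scal.
  assert (Hg : is_derive (fun z => z^2 - 2 * Q v) u (2 * u)).
  { auto_derive; auto. ring. }
  pose proof (is_derive_comp G (fun z => z^2 - 2 * Q v) u _ _ hG Hg) as H.
  replace (G' (u ^ 2 - 2 * Q v) * (2 * u)) with (scal (2 * u) (G' (u ^ 2 - 2 * Q v))).
  exact H. unfold scal; simpl; unfold mult; simpl; ring.
Qed.

Lemma param_deriv (Q k G G' : R -> R) (s0 s : R) :
  (forall t, continuous Q t) -> (forall t, continuous k t) ->
  (forall u t, s0 < u -> 0 < u^2 - 2*Q t) ->
  (forall y, 0 < y -> is_derive G y (G' y)) ->
  (forall y, 0 < y -> continuous G' y) -> s0 < s ->
  is_derive (fun u => RInt (fun t => k t * G (u^2 - 2*Q t)) 0 1) s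
    (RInt (fun t => k t * (G' (s^2 - 2*Q t) * (2*s))) 0 1).
Proof.
  intros Qc kc Qp HG HG' hs.
  assert (Hloc : locally s (fun x => s0 < x)).
  { apply (open_gt s0). exact hs. }
  assert (HGc : forall y, 0 < y -> continuous G y).
  { intros y hy. apply (ex_derive_continuous (K:=R_AbsRing) (V:=R_NormedModule)). eexists. apply HG; auto. }
  assert (E : RInt (fun t => k t * (G' (s^2 - 2*Q t) * (2*s))) 0 1 =
              RInt (fun t => Derive (fun u => k t * G (u^2 - 2*Q t)) s) 0 1).
  { apply RInt_ext. intros x _. symmetry. apply is_derive_unique.
    apply pt_deriv. apply Qp; auto. apply HG. apply Qp; auto. }
  rewrite E.
  apply (is_derive_RInt_param (fun u t => k t * G (u^2 - 2*Q t))).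
  - apply (filter_imp (fun x => s0 < x)); auto.
    intros x hx t _. eexists. apply pt_deriv. apply Qp; auto. apply HG; apply Qp; auto.
  - intros t _.
    apply continuity_2d_pt_ext_loc with (f := fun u v => k v * (G' (u^2 - 2 * Q v) * (2 * u))).
    + assert (hd : 0 < s - s0) by lra; exists (mkposreal _ hd). simpl. intros u v hu _.
      assert (s0 < u).
      { apply Rabs_def2 in hu. lra. }
      symmetry. apply is_derive_unique. apply pt_deriv. apply Qp; auto. apply HG; apply Qp; auto.
    + apply cont2_kG with s0; auto.
  - apply (filter_imp (fun x => s0 < x)); auto.
    intros x hx. apply (ex_RInt_continuous (V:=R_CompleteNormedModule)). intros z _.
    apply (cont_kG Q k G x s0); auto.
Qed.

Lemma G1d : forall y, 0 < y -> is_derive sqrt y (/ (2 * sqrt y)).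
Proof. intros y hy. auto_derive. auto. field. apply Rgt_not_eq, sqrt_lt_R0; auto. Qed.
Lemma G1'c : forall y, 0 < y -> continuous (fun y => / (2 * sqrt y)) y.
Proof. intros y hy. apply (ex_derive_continuous (K:=R_AbsRing) (V:=R_NormedModule)).
  auto_derive. split; auto. split; auto. apply Rgt_not_eq. 
  assert (0 < sqrt y) by (apply sqrt_lt_R0; auto). lra. Qed.
Lemma G2d : forall y, 0 < y -> is_derive (fun y => / sqrt y) y (- / (2 * y * sqrt y)).
Proof. intros y hy. assert (0 < sqrt y) by (apply sqrt_lt_R0; auto).
  auto_derive. split; auto. split; auto. apply Rgt_not_eq; auto.
  replace (2 * y * sqrt y) with (2 * (sqrt y * sqrt y) * sqrt y) by (rewrite sqrt_sqrt; lra). field. lra. Qed.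
Lemma G2'c : forall y, 0 < y -> continuous (fun y => - / (2 * y * sqrt y)) y.
Proof. intros y hy. apply (ex_derive_continuous (K:=R_AbsRing) (V:=R_NormedModule)).
  assert (0 < sqrt y) by (apply sqrt_lt_R0; auto).
  auto_derive. split; auto. split; auto. apply Rgt_not_eq. 
  assert (0 < y * sqrt y) by (apply Rmult_lt_0_compat; auto). lra. Qed.
Lemma G2c : forall y, 0 < y -> continuous (fun y => / sqrt y) y.
Proof. intros y hy. apply (ex_derive_continuous (K:=R_AbsRing) (V:=R_NormedModule)).
  eexists. apply G2d; auto. Qed.
Lemma G1c : forall y, 0 < y -> continuous sqrt y.
Proof. intros y hy. apply (ex_derive_continuous (K:=R_AbsRing) (V:=R_NormedModule)).
  eexists. apply G1d; auto. Qed.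
Lemma G3c : forall y, 0 < y -> continuous (fun y => / (sqrt y)^3) y.
Proof. intros y hy. apply (ex_derive_continuous (K:=R_AbsRing) (V:=R_NormedModule)).
  assert (0 < sqrt y) by (apply sqrt_lt_R0; auto).
  auto_derive. split; auto. split; auto. apply Rgt_not_eq. 
  apply (pow_lt (sqrt y) 3); auto. Qed.

Lemma RInt_scal_R (f : R -> R) a b c : ex_RInt f a b ->
  RInt (fun x => c * f x) a b = c * RInt f a b.
Proof. intros h. apply (RInt_scal f a b c h). Qed.
Lemma RInt_plus_R (f g : R -> R) a b : ex_RInt f a b -> ex_RInt g a b ->
  RInt (fun x => f x + g x) a b = RInt f a b + RInt g a b.
Proof. intros h1 h2. apply (RInt_plus f g a b h1 h2). Qed.
Lemma RInt_minus_R (f g : R -> R) a b : ex_RInt f a b -> ex_RInt g a b ->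
  RInt (fun x => f x - g x) a b = RInt f a b - RInt g a b.
Proof. intros h1 h2. apply (RInt_minus f g a b h1 h2). Qed.

Definition AA1 (Q : R -> R) s := RInt (fun t => (1/2) * sqrt (s^2 - 2*Q t)) 0 1.
Definition AA2 (Q : R -> R) c1 s := RInt (fun t => (c1 - Q t) * / sqrt (s^2 - 2*Q t)) 0 1.
Definition DD (Q : R -> R) s := RInt (fun t => 1 * / sqrt (s^2 - 2*Q t)) 0 1.
Definition JJ (Q : R -> R) s := RInt (fun t => / (sqrt (s^2 - 2*Q t))^3) 0 1.
Definition Sig Q c1 s := AA1 Q s + AA2 Q c1 s - DD Q s ^ 2 / 2.

Lemma sq_ex g : 0 < g -> exists q, 0 < q /\ sqrt g = q /\ g = q * q.
Proof. intros h. exists (sqrt g). split. apply sqrt_lt_R0; auto. split; auto.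
  rewrite sqrt_sqrt; lra. Qed.

Lemma algD g s : 0 < g -> 1 * (- / (2 * g * sqrt g) * (2 * s)) = - s * / (sqrt g)^3.
Proof. intros h. destruct (sq_ex g h) as [q [hq [e1 e2]]]. rewrite e1. subst g. field. lra. Qed.

Lemma algA g s c Qt : 0 < g -> g = s^2 - 2 * Qt ->
  1/2 * (/ (2 * sqrt g) * (2 * s)) + (c - Qt) * (- / (2 * g * sqrt g) * (2 * s))
  = s * (s^2/2 - c) * / (sqrt g)^3.
Proof. intros h e. destruct (sq_ex g h) as [q [hq [e1 e2]]]. rewrite e1.
  replace (s^2) with (q*q + 2*Qt) by lra. rewrite e2. field. lra. Qed.

Lemma exJ Q s0 s : (forall t, continuous Q t) -> (forall u t, s0 < u -> 0 < u^2 - 2*Q t) ->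
  s0 < s -> ex_RInt (fun t => / (sqrt (s^2 - 2*Q t))^3) 0 1.
Proof. intros Qc Qp hs. apply (ex_RInt_continuous (V:=R_CompleteNormedModule)). intros z _.
  apply (continuous_comp (fun t => s^2 - 2 * Q t) (fun y => / (sqrt y)^3)).
  apply cont_g; auto. apply G3c. apply Qp; auto. Qed.

Lemma exkG Q k H s0 s a b : (forall t, continuous Q t) -> (forall t, continuous k t) ->
  (forall u t, s0 < u -> 0 < u^2 - 2*Q t) ->
  (forall y, 0 < y -> continuous H y) -> s0 < s ->
  ex_RInt (fun t => k t * H (s^2 - 2 * Q t)) a b.
Proof. intros. apply (ex_RInt_continuous (V:=R_CompleteNormedModule)). intros z _.
  apply (cont_kG Q k H s s0); auto. Qed.

Lemma DD_der Q s0 s : (forall t, continuous Q t) -> (forall u t, s0 < u -> 0 < u^2 - 2*Q t) ->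
  s0 < s -> is_derive (DD Q) s (- s * JJ Q s).
Proof.
  intros Qc Qp hs.
  pose proof (param_deriv Q (fun _ => 1) (fun y => / sqrt y) (fun y => - / (2 * y * sqrt y)) s0 s
     Qc (fun t => continuous_const 1 t) Qp G2d G2'c hs) as H.
  unfold DD. replace (- s * JJ Q s) with
     (RInt (fun t => 1 * (- / (2 * (s ^ 2 - 2 * Q t) * sqrt (s ^ 2 - 2 * Q t)) * (2 * s))) 0 1).
  exact H.
  unfold JJ. rewrite <- RInt_scal_R. apply RInt_ext. intros x _. apply algD. apply Qp; auto.
  apply exJ with s0; auto.
Qed.

Lemma A_der (Q : R -> R) (c1 s0 s : R) : (forall t, continuous Q t) -> (forall u t, s0 < u -> 0 < u^2 - 2*Q t) ->
  s0 < s -> is_derive (fun u => AA1 Q u + AA2 Q c1 u) s (s * (s^2/2 - c1) * JJ Q s).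
Proof.
  intros Qc Qp hs.
  assert (kc : forall t, continuous (fun t => c1 - Q t) t).
  { intros t. apply (continuous_minus (fun _ => c1) Q). apply continuous_const. apply Qc. }
  pose proof (param_deriv Q (fun _ => 1/2) sqrt (fun y => / (2 * sqrt y)) s0 s
     Qc (fun t => continuous_const _ t) Qp G1d G1'c hs) as H1.
  pose proof (param_deriv Q (fun t => c1 - Q t) (fun y => / sqrt y) (fun y => - / (2 * y * sqrt y)) s0 s
     Qc kc Qp G2d G2'c hs) as H2.
  pose proof (is_derive_plus _ _ _ _ _ H1 H2) as H.
  unfold AA1, AA2.
  replace (s * (s ^ 2 / 2 - c1) * JJ Q s) with
   (plus (RInt (fun t => 1/2 * (/ (2 * sqrt (s ^ 2 - 2 * Q t)) * (2 * s))) 0 1)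
         (RInt (fun t => (c1 - Q t) * (- / (2 * (s ^ 2 - 2 * Q t) * sqrt (s ^ 2 - 2 * Q t)) * (2 * s))) 0 1)).
  exact H.
  unfold plus; simpl. rewrite <- RInt_plus_R.
  unfold JJ. rewrite <- RInt_scal_R. apply RInt_ext. intros x _. apply algA. apply Qp; auto. auto.
  apply exJ with s0; auto.
  apply (exkG Q (fun _ => 1/2) (fun y => / (2 * sqrt y) * (2 * s)) s0 s); auto.
  intros; apply continuous_const.
  intros y hy. apply (continuous_mult (fun y => / (2 * sqrt y)) (fun _ => 2 * s)).
  apply G1'c; auto. apply continuous_const.
  apply (exkG Q (fun t => c1 - Q t) (fun y => - / (2 * y * sqrt y) * (2 * s)) s0 s); auto.
  intros y hy. apply (continuous_mult (fun y => - / (2 * y * sqrt y)) (fun _ => 2 * s)).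
  apply G2'c; auto. apply continuous_const.
Qed.

Lemma Sig_der (Q : R -> R) (c1 s0 s : R) : (forall t, continuous Q t) -> (forall u t, s0 < u -> 0 < u^2 - 2*Q t) ->
  s0 < s -> is_derive (Sig Q c1) s (s * (s^2/2 - c1 + DD Q s) * JJ Q s).
Proof.
  intros Qc Qp hs.
  pose proof (A_der Q c1 s0 s Qc Qp hs) as HA.
  assert (HD : is_derive (fun u => DD Q u ^ 2 / 2) s (- s * JJ Q s * DD Q s)).
  { pose proof (DD_der Q s0 s Qc Qp hs) as HD.
    assert (Hp : is_derive (fun x : R => x^2/2) (DD Q s) (DD Q s)).
    { auto_derive. auto. field. }
    pose proof (is_derive_comp (fun x => x^2/2) (DD Q) s _ _ Hp HD) as H. exact H. }
  pose proof (is_derive_minus _ _ _ _ _ HA HD) as H.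
  unfold Sig.
  replace (s * (s ^ 2 / 2 - c1 + DD Q s) * JJ Q s) with
    (minus (s * (s ^ 2 / 2 - c1) * JJ Q s) (- s * JJ Q s * DD Q s)).
  exact H. unfold minus, plus, opp; simpl. ring.
Qed.

Lemma J_dec (Q : R -> R) (s0 a b : R) : (forall t, continuous Q t) -> (forall u t, s0 < u -> 0 < u^2 - 2*Q t) ->
  0 <= s0 -> s0 < a -> a < b -> JJ Q b < JJ Q a.
Proof.
  intros Qc Qp h0 ha hab. unfold JJ. apply RInt_lt. lra.
  intros x _. apply (continuous_comp (fun t => a^2 - 2 * Q t) (fun y => / (sqrt y)^3)).
  apply cont_g; auto. apply G3c. apply Qp; auto.
  intros x _. apply (continuous_comp (fun t => b^2 - 2 * Q t) (fun y => / (sqrt y)^3)).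
  apply cont_g; auto. apply G3c. apply Qp; lra.
  intros x _. pose proof (Qp a x ha). pose proof (Qp b x ltac:(lra)).
  assert (a^2 - 2 * Q x < b^2 - 2 * Q x) by nra.
  assert (sqrt (a^2 - 2*Q x) < sqrt (b^2 - 2*Q x)) by (apply sqrt_lt_1; lra).
  assert (0 < sqrt (a^2 - 2*Q x)) by (apply sqrt_lt_R0; lra).
  apply Rinv_lt_contravar.
  apply Rmult_lt_0_compat; apply pow_lt; lra.
  set (p := sqrt (a ^ 2 - 2 * Q x)) in *. set (q := sqrt (b ^ 2 - 2 * Q x)) in *.
  simpl. assert (p*p < q*q) by nra. assert (p*p*p < q*q*q) by nra. nra.
Qed.

Lemma J_pos (Q : R -> R) (s0 s : R) : (forall t, continuous Q t) -> (forall u t, s0 < u -> 0 < u^2 - 2*Q t) ->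
  s0 < s -> 0 < JJ Q s.
Proof.
  intros Qc Qp hs.
  replace 0 with (RInt (fun _ => 0) 0 1).
  unfold JJ. apply RInt_lt. lra.
  intros x _. apply (continuous_comp (fun t => s^2 - 2 * Q t) (fun y => / (sqrt y)^3)).
  apply cont_g; auto. apply G3c. apply Qp; auto.
  intros; apply continuous_const.
  intros x _. apply Rinv_0_lt_compat. apply pow_lt. apply sqrt_lt_R0. apply Qp; auto.
  rewrite RInt_const. unfold scal; simpl; unfold mult; simpl. ring.
Qed.

Lemma F_id (Q : R -> R) (s0 s : R) : (forall t, continuous Q t) ->
  (forall u t, s0 < u -> 0 < u^2 - 2*Q t) -> s0 < s ->
  is_RInt (fun p => RInt (fun t => 1 * / sqrt (s^2 - 2*Q t)) 0 p * (1 * / sqrt (s^2 - 2*Q p))) 0 1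
  (DD Q s ^ 2 / 2).
Proof.
  intros Qc Qp hs.
  set (f := fun t => 1 * / sqrt (s^2 - 2*Q t)).
  assert (fc : forall t, continuous f t).
  { intros t. apply (cont_kG Q (fun _ => 1) (fun y => / sqrt y) s s0); auto.
    intros; apply continuous_const. apply G2c. }
  assert (fex : forall a b, ex_RInt f a b).
  { intros a b. apply (ex_RInt_continuous (V:=R_CompleteNormedModule)). intros; apply fc. }
  set (F := fun p => RInt f 0 p).
  assert (Fd : forall p, is_derive F p (f p)).
  { intros p. apply (is_derive_RInt f F 0 p).
    apply filter_forall. intros b. apply (RInt_correct (V:=R_CompleteNormedModule)). apply fex.
    apply fc. }
  assert (Fc : forall p, continuous F p).
  { intros p. apply (ex_derive_continuous (K:=R_AbsRing) (V:=R_NormedModule)). eexists; apply Fd. }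
  assert (H : is_RInt (fun p => F p * f p) 0 1 (minus (F 1 ^ 2 / 2) (F 0 ^ 2 / 2))).
  { apply (is_RInt_derive (fun p => F p ^ 2 / 2) (fun p => F p * f p)).
    - intros x _.
      assert (Hp : is_derive (fun x : R => x^2/2) (F x) (F x)).
      { auto_derive. auto. field. }
      pose proof (is_derive_comp (fun x => x^2/2) F x _ _ Hp (Fd x)) as H.
      replace (F x * f x) with (scal (f x) (F x)). exact H.
      unfold scal; simpl; unfold mult; simpl; ring.
    - intros x _. apply (continuous_mult F f). apply Fc. apply fc. }
  change (is_RInt (fun p => F p * f p) 0 1 (DD Q s ^ 2 / 2)).
  replace (DD Q s ^ 2 / 2) with (minus (F 1 ^ 2 / 2) (F 0 ^ 2 / 2)). exact H.
  unfold F. rewrite RInt_point. unfold minus, plus, opp, zero; simpl.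
  unfold DD. fold f. generalize (RInt f 0 1 : R). intros z. simpl in z |- *. lra.
Qed.

Lemma Qp_of (Q : R -> R) (M : R) : (forall t, 2 * Q t <= M) -> 0 <= M ->
  forall u t, sqrt M < u -> 0 < u^2 - 2*Q t.
Proof.
  intros HM hM u t hu. pose proof (HM t). pose proof (sqrt_pos M).
  pose proof (sqrt_sqrt M hM). nra.
Qed.

Lemma Sig_lb (Q : R -> R) (M c1 s : R) : (forall t, continuous Q t) ->
  (forall t, 2 * Q t <= M) -> 0 <= M -> sqrt M + 1 <= s ->
  (s - sqrt M)/2 - Rabs (c1 - M/2) - 1/2 <= Sig Q c1 s.
Proof.
  intros Qc HM hM hs.
  pose proof (Qp_of Q M HM hM) as Qp.
  assert (hs' : sqrt M < s) by lra.
  pose proof (sqrt_pos M) as hsM. pose proof (sqrt_sqrt M hM) as eM.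
  assert (Hq : forall t, s - sqrt M <= sqrt (s^2 - 2 * Q t)).
  { intros t. rewrite <- (sqrt_pow2 (s - sqrt M)) by lra. apply sqrt_le_1_alt.
    pose proof (HM t). nra. }
  assert (H1 : (s - sqrt M)/2 <= AA1 Q s).
  { unfold AA1. replace ((s - sqrt M)/2) with (RInt (fun _ => 1/2 * (s - sqrt M)) 0 1).
    apply RInt_le. lra. apply ex_RInt_const.
    apply (exkG Q (fun _ => 1/2) sqrt (sqrt M) s); auto. intros; apply continuous_const. apply G1c.
    intros x _. pose proof (Hq x). lra.
    rewrite RInt_const. unfold scal; simpl; unfold mult; simpl. field. }
  assert (H2 : - Rabs (c1 - M/2) <= AA2 Q c1 s).
  { unfold AA2. replace (- Rabs (c1 - M/2)) with (RInt (fun _ => - Rabs (c1 - M/2)) 0 1).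
    apply RInt_le. lra. apply ex_RInt_const.
    apply (exkG Q (fun t => c1 - Q t) (fun y => / sqrt y) (sqrt M) s); auto.
    intros t. apply (continuous_minus (fun _ => c1) Q). apply continuous_const. apply Qc.
    apply G2c.
    intros x _. pose proof (Hq x). pose proof (HM x).
    set (q := sqrt (s ^ 2 - 2 * Q x)) in *.
    assert (0 < /q) by (apply Rinv_0_lt_compat; lra).
    assert (/q <= 1). { replace 1 with (/1) by field. apply Rinv_le_contravar; lra. }
    pose proof (Rabs_pos (c1 - M/2)). pose proof (Rle_abs (-(c1 - M/2))). rewrite Rabs_Ropp in *.
    destruct (Rle_dec 0 (c1 - Q x)); nra.
    rewrite RInt_const. unfold scal; simpl; unfold mult; simpl. ring. }
  assert (H3 : 0 <= DD Q s <= 1).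
  { unfold DD. split.
    - apply Rle_trans with (RInt (fun _ => 0) 0 1).
      right. rewrite RInt_const. unfold scal; simpl; unfold mult; simpl. ring.
      apply RInt_le. lra. apply ex_RInt_const.
      apply (exkG Q (fun _ => 1) (fun y => / sqrt y) (sqrt M) s); auto. intros; apply continuous_const.
      apply G2c.
      intros x _. pose proof (Hq x). rewrite Rmult_1_l. left. apply Rinv_0_lt_compat. lra.
    - apply Rle_trans with (RInt (fun _ => 1) 0 1).
      2:{ right. rewrite RInt_const. unfold scal; simpl; unfold mult; simpl. ring. }
      apply RInt_le. lra.
      apply (exkG Q (fun _ => 1) (fun y => / sqrt y) (sqrt M) s); auto. intros; apply continuous_const.
      apply G2c. apply ex_RInt_const.
      intros x _. pose proof (Hq x). rewrite Rmult_1_l.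
      replace 1 with (/1) by field. apply Rinv_le_contravar; lra. }
  unfold Sig. nra.
Qed.

Lemma W_der (om : R -> R) : (forall x, continuous om x) ->
  forall p, is_derive (Omega om) p (om p).
Proof.
  intros omc p. unfold Omega.
  apply (is_derive_RInt om (fun b => RInt om 0 b) 0 p).
  apply filter_forall. intros b. apply (RInt_correct (V:=R_CompleteNormedModule)).
  apply (ex_RInt_continuous (V:=R_CompleteNormedModule)). intros; apply omc.
  apply omc.
Qed.

Lemma W_cont (om : R -> R) : (forall x, continuous om x) ->
  forall p, continuous (Omega om) p.
Proof.
  intros omc p. apply (ex_derive_continuous (K:=R_AbsRing) (V:=R_NormedModule)).
  eexists. apply W_der; auto.
Qed.

Definition cl (t : R) := Rmax 0 (Rmin 1 t).

Lemma cl_eq t : cl t = ((1 + t - Rabs (1 - t)) / 2 + Rabs ((1 + t - Rabs (1 - t)) / 2)) / 2.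
Proof.
  unfold cl, Rmax, Rmin.
  destruct (Rle_dec 1 t); destruct (Rle_dec 0 _); unfold Rabs;
  repeat (destruct (Rcase_abs _)); lra.
Qed.

Lemma cont_min1 (f : R -> R) x : continuous f x ->
  continuous (fun t => (1 + f t - Rabs (1 - f t)) / 2) x.
Proof.
  intros hf.
  apply (continuous_mult (fun t => 1 + f t - Rabs (1 - f t)) (fun _ => /2)).
  2: apply continuous_const.
  apply (continuous_minus (fun t => 1 + f t) (fun t => Rabs (1 - f t))).
  apply (continuous_plus (fun _ => 1) f). apply continuous_const. auto.
  apply (continuous_Rabs_comp (fun t => 1 - f t)).
  apply (continuous_minus (fun _ => 1) f). apply continuous_const. auto.
Qed.

Lemma cont_max0 (f : R -> R) x : continuous f x ->
  continuous (fun t => (f t + Rabs (f t)) / 2) x.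
Proof.
  intros hf.
  apply (continuous_mult (fun t => f t + Rabs (f t)) (fun _ => /2)).
  2: apply continuous_const.
  apply (continuous_plus f (fun t => Rabs (f t))). auto.
  apply (continuous_Rabs_comp f). auto.
Qed.

Lemma cl_cont t : continuous cl t.
Proof.
  apply (continuous_ext (fun t => ((1 + t - Rabs (1 - t)) / 2 + Rabs ((1 + t - Rabs (1 - t)) / 2)) / 2)).
  intros x. rewrite cl_eq. reflexivity.
  apply (cont_max0 (fun t => (1 + t - Rabs (1 - t)) / 2)).
  apply (cont_min1 (fun t => t)). apply continuous_id.
Qed.

Lemma cl_in t : 0 <= cl t <= 1.
Proof. unfold cl, Rmax, Rmin. destruct (Rle_dec 1 t); destruct (Rle_dec 0 _); lra. Qed.

Lemma cl_id t : 0 <= t <= 1 -> cl t = t.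
Proof. intros h. unfold cl, Rmax, Rmin. destruct (Rle_dec 1 t); destruct (Rle_dec 0 _); lra. Qed.

Theorem lemma3p6 (om : R -> R) (M s0 sc : R) (R0 : Rbar) (r sm sp : R) :
  (* vorticity: continuous *)
  (forall x, continuous om x) ->
  (* M = max_{[0,1]} 2 Omega, s0 = sqrt M *)
  (forall p, 0 <= p <= 1 -> 2 * Omega om p <= M) ->
  (exists p, 0 <= p <= 1 /\ 2 * Omega om p = M) ->
  s0 = sqrt M ->
  (* critical value s_c *)
  s0 < sc ->
  RInt (fun p => / (sqrt (sc ^ 2 - 2 * Omega om p)) ^ 3) 0 1 = 1 ->
  (* R_0 = lim_{s -> s0+} R(s), R_c = R(s_c) *)
  filterlim (Bern om) (at_right s0) (Rbar_locally R0) ->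
  (* r in (R_c, R_0) *)
  Bern om sc < r -> Rbar_lt r R0 ->
  (* s_-(r) < s_c < s_+(r), the two solutions of R(s) = r *)
  s0 < sm < sc -> sc < sp -> Bern om sm = r -> Bern om sp = r ->
  (forall a b, s0 < a -> a < b -> b < sm -> flow_force om a r < flow_force om b r) /\
  (forall a b, sm < a -> a < b -> b < sp -> flow_force om b r < flow_force om a r) /\
  (forall a b, sp < a -> a < b -> flow_force om a r < flow_force om b r) /\
  is_lim (fun s => flow_force om s r) p_infty p_infty.
Proof.
  intros omc Hmax _ es0 hsc hJ _ hBsc _ [hsm1 hsm2] hsp hBm hBp.
  subst s0.
  set (W := Omega om).
  set (Q := fun t => W (cl t)).
  assert (Qc : forall t, continuous Q t).
  { intros t. apply (continuous_comp cl W). apply cl_cont. apply W_cont; auto. }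
  assert (HMQ : forall t, 2 * Q t <= M). { intros t. apply Hmax. apply cl_in. }
  assert (W0 : W 0 = 0). { unfold W, Omega. rewrite RInt_point. reflexivity. }
  assert (hM : 0 <= M). { pose proof (Hmax 0 ltac:(lra)). fold W in H. lra. }
  pose proof (Qp_of Q M HMQ hM) as Qp.
  pose proof (sqrt_pos M) as hsM.
  assert (QW : forall t, 0 <= t <= 1 -> Q t = W t).
  { intros t ht. unfold Q. rewrite cl_id; auto. }
  assert (Bern_eq : forall s, Bern om s = s^2/2 - W 1 + DD Q s).
  { intros s. unfold Bern, depth, Hfun, DD. fold W. f_equal. apply RInt_ext.
    intros x hx. rewrite Rmin_left in hx by lra. rewrite Rmax_right in hx by lra.
    unfold Hp. fold W. rewrite QW by lra. rewrite Rmult_1_l. reflexivity. }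
  assert (Jsc : JJ Q sc = 1).
  { rewrite <- hJ. unfold JJ. apply RInt_ext.
    intros x hx. rewrite Rmin_left in hx by lra. rewrite Rmax_right in hx by lra.
    fold W. rewrite QW by lra. reflexivity. }
  set (c1 := W 1 + r).
  assert (flow_eq : forall s, sqrt M < s -> flow_force om s r = Sig Q c1 s).
  { intros s hs.
    assert (gpos : forall t, 0 < s^2 - 2 * Q t) by (intros; apply Qp; auto).
    pose proof (F_id Q (sqrt M) s Qc Qp hs) as HF.
    unfold flow_force.
    rewrite (RInt_ext _ (fun p => ((1/2) * sqrt (s^2 - 2*Q p) + (c1 - Q p) * / sqrt (s^2 - 2*Q p))
       - RInt (fun t => 1 * / sqrt (s^2 - 2*Q t)) 0 p * (1 * / sqrt (s^2 - 2*Q p)))).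
    2:{ intros x hx. rewrite Rmin_left in hx by lra. rewrite Rmax_right in hx by lra.
        assert (HH : Hfun om s x = RInt (fun t => 1 * / sqrt (s^2 - 2*Q t)) 0 x).
        { unfold Hfun. apply RInt_ext. intros y hy. rewrite Rmin_left in hy by lra.
          rewrite Rmax_right in hy by lra. unfold Hp. fold W. rewrite QW by lra. rewrite Rmult_1_l. reflexivity. }
        rewrite HH. unfold Hp. fold W. rewrite <- (QW x) by lra. unfold c1.
        pose proof (sqrt_lt_R0 _ (gpos x)).
        generalize (RInt (fun t : R => 1 * / sqrt (s ^ 2 - 2 * Q t)) 0 x : R). intros F.
        set (q := sqrt (s^2 - 2*Q x)) in *. match goal with |- @eq _ ?a ?b => change (@eq R a b) end. field. lra. }
    assert (E1 : ex_RInt (fun p => (1/2) * sqrt (s^2 - 2*Q p)) 0 1).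
    { apply (exkG Q (fun _ => 1/2) sqrt (sqrt M) s); auto. intros; apply continuous_const. apply G1c. }
    assert (E2 : ex_RInt (fun p => (c1 - Q p) * / sqrt (s^2 - 2*Q p)) 0 1).
    { apply (exkG Q (fun t => c1 - Q t) (fun y => / sqrt y) (sqrt M) s); auto.
      intros t. apply (continuous_minus (fun _ => c1) Q). apply continuous_const. apply Qc.
      apply G2c. }
    assert (E3 : ex_RInt (fun p => (1/2) * sqrt (s^2 - 2*Q p) + (c1 - Q p) * / sqrt (s^2 - 2*Q p)) 0 1).
    { apply (ex_RInt_plus _ _ _ _ E1 E2). }
    assert (E4 : ex_RInt (fun p => RInt (fun t => 1 * / sqrt (s^2 - 2*Q t)) 0 p * (1 * / sqrt (s^2 - 2*Q p))) 0 1).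
    { eexists. exact HF. }
    rewrite (RInt_minus_R _ _ _ _ E3 E4). rewrite (RInt_plus_R _ _ _ _ E1 E2).
    rewrite (is_RInt_unique _ _ _ _ HF). unfold Sig, AA1, AA2. reflexivity. }
  assert (Bder : forall s, sqrt M < s -> is_derive (Bern om) s (s * (1 - JJ Q s))).
  { intros s hs. apply (is_derive_ext (fun s => s^2/2 - W 1 + DD Q s)).
    intros; rewrite Bern_eq; reflexivity.
    pose proof (DD_der Q (sqrt M) s Qc Qp hs) as HD.
    assert (H1 : is_derive (fun s : R => s^2/2 - W 1) s s). { auto_derive. auto. field. }
    pose proof (is_derive_plus _ _ _ _ _ H1 HD) as H.
    replace (s * (1 - JJ Q s)) with (plus s (- s * JJ Q s)). exact H. unfold plus; simpl; ring. }
  assert (Bdec : forall a b, sqrt M < a -> a < b -> b < sc -> Bern om b < Bern om a).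
  { intros a b ha hab hb.
    cut (- Bern om a < - Bern om b). lra.
    apply (incr_function (fun s => - Bern om s) (sqrt M) sc (fun s => - (s * (1 - JJ Q s)))); simpl; auto; try lra.
    - intros x h1 h2. apply (is_derive_opp (Bern om)). apply Bder; auto.
    - intros x h1 h2. pose proof (J_dec Q (sqrt M) x sc Qc Qp hsM h1 h2). nra. }
  assert (Binc : forall a b, sc < a -> a < b -> Bern om a < Bern om b).
  { intros a b ha hab.
    apply (incr_function (Bern om) sc p_infty (fun s => s * (1 - JJ Q s))); simpl; try lra.
    - intros x h1 h2. apply Bder; lra.
    - intros x h1 h2. pose proof (J_dec Q (sqrt M) sc x Qc Qp hsM hsc h1). nra. }
  assert (SD : forall s, sqrt M < s -> is_derive (Sig Q c1) s (s * (Bern om s - r) * JJ Q s)).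
  { intros s hs. replace (Bern om s - r) with (s^2/2 - c1 + DD Q s).
    apply (Sig_der Q c1 (sqrt M) s Qc Qp hs). rewrite Bern_eq. unfold c1. ring. }
  split; [|split; [|split]].
  - intros a b ha hab hb. rewrite !flow_eq by lra.
    apply (incr_function (Sig Q c1) (sqrt M) sm (fun s => s * (Bern om s - r) * JJ Q s)); simpl; try lra.
    + intros x h1 h2. apply SD; auto.
    + intros x h1 h2. assert (Bern om sm < Bern om x) by (apply Bdec; lra).
      pose proof (J_pos Q (sqrt M) x Qc Qp h1).
      apply Rmult_lt_0_compat; auto. apply Rmult_lt_0_compat; lra.
  - intros a b ha hab hb. rewrite !flow_eq by lra.
    cut (- Sig Q c1 a < - Sig Q c1 b). lra.
    apply (incr_function (fun s => - Sig Q c1 s) sm sp (fun s => - (s * (Bern om s - r) * JJ Q s))); simpl; try lra.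
    + intros x h1 h2. apply (is_derive_opp (Sig Q c1)). apply SD; lra.
    + intros x h1 h2. assert (Bern om x < r).
      { destruct (Rtotal_order x sc) as [h|[h|h]].
        - rewrite <- hBm. apply Bdec; lra.
        - subst x; auto.
        - rewrite <- hBp. apply Binc; lra. }
      pose proof (J_pos Q (sqrt M) x Qc Qp ltac:(lra)).
      assert (0 < x * (r - Bern om x) * JJ Q x).
      { apply Rmult_lt_0_compat; auto. apply Rmult_lt_0_compat; lra. }
      nra.
  - intros a b ha hab. rewrite !flow_eq by lra.
    apply (incr_function (Sig Q c1) sp p_infty (fun s => s * (Bern om s - r) * JJ Q s)); simpl; try lra.
    + intros x h1 h2. apply SD; lra.
    + intros x h1 h2. assert (Bern om sp < Bern om x) by (apply Binc; lra).
      pose proof (J_pos Q (sqrt M) x Qc Qp ltac:(lra)).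
      apply Rmult_lt_0_compat; auto. apply Rmult_lt_0_compat; lra.
  - unfold is_lim, filterlim, filter_le, filtermap. intros P HP.
    destruct HP as [N HN]. simpl.
    set (K := Rabs (c1 - M/2)).
    exists (Rmax (sqrt M + 1) (2 * (N + K + 1) + sqrt M)). intros x hx. apply HN.
    pose proof (Rmax_l (sqrt M + 1) (2 * (N + K + 1) + sqrt M)).
    pose proof (Rmax_r (sqrt M + 1) (2 * (N + K + 1) + sqrt M)).
    rewrite flow_eq by lra. pose proof (Sig_lb Q M c1 x Qc HMQ hM ltac:(lra)). fold K in H1. lra.
Qed.
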